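(* For every integer $n\geq1$, $\mathrm{C}_{\{0,\ldots,n\}}\nleq_W\mathrm{C}_{\sharp\leq n}$.
   Context: Represented spaces carry partial surjections $\delta:\subseteq\mathbb{N}^\mathbb{N}\to X$; a realizer $F$ of $f$ satisfies $\delta_YF(p)\in f(\delta_X(p))$ for $p\in\operatorname{dom}(f\delta_X)$. $f\leq_W g$ iff there are computable partial $K,H$ on Baire space such that $p\mapsto K\langle p,G(H(p))\rangle$ realizes $f$ for every realizer $G$ of $g$. $\mathrm{C}_{\{0,\ldots,n\}}$ is closed choice on the discrete space $\{0,\ldots,n\}$ (given a non-empty subset by an enumeration of its complement, output an element). Closed subsets of Cantor space are named by binary trees (set of infinite paths); $\mathrm{C}_{\sharp\leq n}$ is the restriction of $\mathrm{C}_{\{0,1\}^\mathbb{N}}$ (output any point of the closed set) to trees having exactly $n$ vertices at each level $k$ with $2^k\geq n$. *)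

(* Defs.v *)
From mathcomp Require Import all_boot.
Set Implicit Arguments. Unset Strict Implicit. Unset Printing Implicit Defensive.

Inductive rcode : Type :=
  | RZero | RSucc | RProj of nat
  | RComp of rcode & list rcode
  | RPrimRec of rcode & rcode
  | RMu of rcode.

Inductive reval : rcode -> seq nat -> nat -> Prop :=
  | ev_zero v : reval RZero v 0
  | ev_succ v : reval RSucc v (head 0 v).+1
  | ev_proj i v : reval (RProj i) v (nth 0 v i)
  | ev_comp f gs v ws y :
      revals gs v ws -> reval f ws y -> reval (RComp f gs) v y
  | ev_rec0 f g v y : reval f v y -> reval (RPrimRec f g) (0 :: v) y
  | ev_recS f g x v y z :
      reval (RPrimRec f g) (x :: v) y -> reval g (x :: y :: v) z ->
      reval (RPrimRec f g) (x.+1 :: v) z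
  | ev_mu f v x :
      reval f (x :: v) 0 ->
      (forall y, y < x -> exists z, reval f (y :: v) z.+1) ->
      reval (RMu f) v x
with revals : seq rcode -> seq nat -> seq nat -> Prop :=
  | evs_nil v : revals [::] v [::]
  | evs_cons g gs v w ws :
      reval g v w -> revals gs v ws -> revals (g :: gs) v (w :: ws).

Definition baire := nat -> nat.

Definition cpair (x y : nat) : nat := (x + y) * (x + y).+1 %/ 2 + y.
Fixpoint enc (s : seq nat) : nat :=
  if s is x :: s' then (cpair x (enc s')).+1 else 0.

Definition prefix (p : baire) (k : nat) : seq nat := mkseq p k.

(* A partial function on Baire space F :<= N^N -> N^N is computable iff some
   machine computes it on dom(F): a partial recursive c which, asked for the
   n-th output digit after reading the prefix p|k, answers 0 ("not yet") or
   (digit)+1, answers correctly whenever it answers, and eventually answers. *)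
Definition computable_pf (F : baire -> option baire) : Prop :=
  exists c : rcode, forall p q, F p = Some q -> forall n,
    (exists k, reval c [:: n; enc (prefix p k)] (q n).+1) /\
    (forall k y, reval c [:: n; enc (prefix p k)] y -> y = 0 \/ y = (q n).+1).

Definition pairB (p q : baire) : baire :=
  fun i => if odd i then q i./2 else p i./2.

Record repspace := RepSpace {
  carrier :> Type;
  delta : baire -> carrier -> Prop
}.

Record problem (X Y : repspace) := Problem {
  pdom : X -> Prop;
  pval : X -> Y -> Prop
}.

Definition realizes (X Y : repspace) (f : problem X Y)
    (F : baire -> option baire) : Prop :=
  forall p x, delta p x -> pdom f x ->
    exists q, F p = Some q /\ exists y, delta q y /\ pval f x y.

Definition weihrauch_le (X Y X' Y' : repspace)
    (f : problem X Y) (g : problem X' Y') : Prop :=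
  exists K H : baire -> option baire,
    computable_pf K /\ computable_pf H /\
    forall G : baire -> option baire, realizes g G ->
      realizes f (fun p => match H p with
                           | Some r => match G r with
                                       | Some s => K (pairB p s)
                                       | None => None
                                       end
                           | None => None
                           end).

Definition rep_fin (n : nat) : repspace :=
  @RepSpace 'I_n.+1 (fun p k => p 0 = k).

(* closed subsets of {0,...,n}, named by an enumeration of the complement:
   p names A iff k \notin A exactly when k+1 occurs in the range of p *)
Definition rep_closed_fin (n : nat) : repspace :=
  @RepSpace {set 'I_n.+1}
    (fun p A => forall k : 'I_n.+1, k \notin A <-> exists i, p i = k.+1).

Definition C_fin (n : nat) : problem (rep_closed_fin n) (rep_fin n) :=
  @Problem (rep_closed_fin n) (rep_fin n)
    (fun A => A != set0) (fun A k => k \in A).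

(* coding of binary words as naturals: w |-> (binary value of 1w) - 1 *)
Definition wcode (w : seq bool) : nat :=
  (foldl (fun a (b : bool) => a.*2 + b) 1 w).-1.

Definition rep_tree : repspace :=
  @RepSpace (seq bool -> bool) (fun p T => forall w, p (wcode w) = T w).

Definition rep_cantor : repspace :=
  @RepSpace (nat -> bool) (fun p x => forall i, p i = x i).

Definition is_tree (T : seq bool -> bool) : Prop :=
  forall w v, T (w ++ v) -> T w.

Definition is_path (T : seq bool -> bool) (x : nat -> bool) : Prop :=
  forall k, T (mkseq x k).

Definition level_card (n : nat) (T : seq bool -> bool) : Prop :=
  forall k, n <= 2 ^ k -> #|[set t : k.-tuple bool | T t]| = n.

Definition C_sharp (n : nat) : problem rep_tree rep_cantor :=
  @Problem rep_tree rep_cantor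
    (fun T => is_tree T /\ level_card n T) (fun T x => is_path T x).

(* Main.v *)
Require Import Defs.
From mathcomp Require Import all_boot zify.
From Stdlib Require Import Classical ClassicalEpsilon FunctionalExtensionality.
Set Implicit Arguments. Unset Strict Implicit. Unset Printing Implicit Defensive.

Fixpoint AllP {X} (P : X -> Prop) (s : seq X) : Prop :=
  if s is x :: s' then P x /\ AllP P s' else True.
Fixpoint ExP {X} (P : X -> Prop) (s : seq X) : Prop :=
  if s is x :: s' then P x \/ ExP P s' else False.

Lemma AllP_mem (X : eqType) (P : X -> Prop) s :
  (forall x, x \in s -> P x) -> AllP P s.
Proof.
elim: s => //= x s IH H; split; first by apply: H; rewrite inE eqxx.
by apply: IH => z zs; apply: H; rewrite inE zs orbT.
Qed.

Lemma mem_AllP (X : eqType) (P : X -> Prop) s :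
  AllP P s -> forall x, x \in s -> P x.
Proof.
elim: s => //= x s IH [Px As] z; rewrite inE => /orP [/eqP -> //|]; exact: IH.
Qed.

Lemma AllP_impl X (P Q : X -> Prop) s : (forall x, P x -> Q x) -> AllP P s -> AllP Q s.
Proof. by move=> H; elim: s => //= x s IH [? ?]; split; auto. Qed.

Lemma common_bound X (P : X -> nat -> Prop) :
  (forall x l l', l <= l' -> P x l -> P x l') ->
  forall s, AllP (fun x => exists l, P x l) s -> exists L, AllP (fun x => P x L) s.
Proof.
move=> mono; elim=> [|x s IH] /=; first by exists 0.
move=> [[l Pl] /IH [L AL]]; exists (maxn l L); split.
  by apply: mono Pl; rewrite leq_maxl.
by apply: AllP_impl AL => y; apply: mono; rewrite leq_maxr.
Qed.

Lemma bounded_max (Q : nat -> Prop) N : Q 0 -> (forall s, Q s -> s <= N) ->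
  exists s, Q s /\ forall s', Q s' -> s' <= s.
Proof.
move=> Q0 QN; apply: NNPP => Hno.
have H : forall s, Q s -> exists s', Q s' /\ s < s'.
  move=> s Qs; apply: NNPP => Hn; apply: Hno; exists s; split => // s' Qs'.
  rewrite leqNgt; apply/negP => lt; apply: Hn; by exists s'.
have : forall k, exists s, Q s /\ k <= s.
  elim=> [|k [s [Qs ks]]]; first by exists 0.
  have [s' [Qs' ss']] := H s Qs; exists s'; split => //; exact: leq_ltn_trans ss'.
move=> /(_ N.+1) [s [Qs Ns]]; have := QN s Qs; lia.
Qed.

Definition inf (T : seq bool -> bool) w := forall l, exists v, size v = l /\ T (w ++ v).

Lemma tree_take T w v l : is_tree T -> T (w ++ v) -> T (w ++ take l v).
Proof. by move=> tT; rewrite -{1}(cat_take_drop l v) catA; apply: tT. Qed.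

Lemma inf_step T : is_tree T -> forall w, inf T w -> exists b, inf T (rcons w b).
Proof.
move=> tT w iw; apply: NNPP => Hn.
have nb : forall b, exists l, forall v, size v = l -> ~~ T (rcons w b ++ v).
  move=> b; apply: NNPP => H1; apply: Hn; exists b => l; apply: NNPP => H2.
  apply: H1; exists l => v sv; apply/negP => Tv; apply: H2; by exists v.
have [l0 H0] := nb false; have [l1 H1] := nb true.
have [v [sv Tv]] := iw (maxn l0 l1).+1.
case: v sv Tv => [//|b v] /= [sv]; rewrite -cat_rcons => Tv.
have sz : forall l, l <= maxn l0 l1 -> size (take l v) = l.
  by move=> l ll; rewrite size_takel // sv.
case: b Tv => Tv.
  by move: (H1 _ (sz _ (leq_maxr _ _))); rewrite (tree_take _ tT Tv).
by move: (H0 _ (sz _ (leq_maxl _ _))); rewrite (tree_take _ tT Tv).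
Qed.

Lemma konig T : is_tree T -> forall w, inf T w ->
  exists y, is_path T y /\ mkseq y (size w) = w.
Proof.
move=> tT w iw.
pose f := fun u => if excluded_middle_informative (inf T (rcons u false))
                   then rcons u false else rcons u true.
have finf : forall u, inf T u -> inf T (f u).
  move=> u iu; rewrite /f; destruct (excluded_middle_informative _) as [|Hn] => //.
  have [b ib] := inf_step tT iu; by case: b ib.
pose W k := iter k f w.
have WS : forall k, exists b, W k.+1 = rcons (W k) b.
  move=> k; rewrite /W /= /f; destruct (excluded_middle_informative _); [exists false|exists true]; done.
have Wsz : forall k, size (W k) = size w + k.
  elim=> [|k IH]; first by rewrite addn0.
  by have [b ->] := WS k; rewrite size_rcons IH addnS.
have Wpre : forall k d, exists s, W (k + d) = W k ++ s.
  move=> k; elim=> [|d [s IH]]; first by exists [::]; rewrite addn0 cats0.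
  have [b E] := WS (k + d); exists (rcons s b); by rewrite addnS E IH rcons_cat.
have Winf : forall k, inf T (W k).
  elim=> // k IH; exact: finf.
have Wnth : forall k k' i, i < size (W k) -> i < size (W k') ->
    nth false (W k) i = nth false (W k') i.
  move=> k k' i.
  have gen : forall a b, a <= b -> i < size (W a) -> nth false (W a) i = nth false (W b) i.
    move=> a b ab ia; case: (Wpre a (b - a)) => s' E; rewrite (subnKC ab) in E.
    by rewrite E nth_cat ia.
  case: (leqP k k') => kk ik ik'; first exact: gen.
  by symmetry; apply: gen => //; exact: ltnW.
pose y i := nth false (W i.+1) i.
have ymk : forall l, mkseq y l = take l (W l).
  move=> l; apply: (@eq_from_nth _ false).
    by rewrite size_mkseq size_takel // Wsz leq_addl.
  move=> i; rewrite size_mkseq => il; rewrite nth_mkseq // nth_take //.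
  by apply: Wnth; rewrite Wsz; lia.
exists y; split.
  move=> l; rewrite ymk.
  have [v [sv Tv]] := Winf l 0; case: v sv Tv => // _.
  rewrite cats0 -{1}(cat_take_drop l (W l)) => Tv; exact: tT Tv.
rewrite ymk; have [s E] := Wpre 0 (size w); rewrite add0n in E; by rewrite E /= take_size_cat.
Qed.

Lemma n_le_pow n k : n <= k -> n <= 2 ^ k.
Proof. move=> nk; apply: leq_trans (ltnW (ltn_expl n (isT : 1 < 2))) _; exact: leq_pexp2l. Qed.

Lemma valid_inf n T : is_tree T -> level_card n T -> 0 < n -> inf T [::].
Proof.
move=> tT lT n0 l.
have := lT (l + n) (n_le_pow (leq_addl _ _)).
move=> cn; have : 0 < #|[set t : (l + n).-tuple bool | T t]| by rewrite cn.
case/card_gt0P => t; rewrite inE => Tt.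
exists (take l t); split; first by rewrite size_takel // size_tuple leq_addr.
by rewrite /=; exact: (@tree_take T [::] t l tT Tt).
Qed.

Fixpoint sepk k (l : seq (nat -> bool)) : Prop :=
  if l is y :: l' then AllP (fun y' => exists2 i, i < k & y i <> y' i) l' /\ sepk k l'
  else True.
Fixpoint sepl (l : seq (nat -> bool)) : Prop :=
  if l is y :: l' then AllP (fun y' => exists i, y i <> y' i) l' /\ sepl l' else True.

Lemma sepk_mono k k' l : k <= k' -> sepk k l -> sepk k' l.
Proof.
move=> kk; elim: l => //= y l IH [A S]; split; last exact: IH.
by apply: AllP_impl A => y' [i ik ne]; exists i => //; exact: leq_trans kk.
Qed.

Lemma sepl_sepk l : sepl l -> exists k, sepk k l.
Proof.
elim: l => [|y l IH] /=; first by exists 0.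
move=> [A /IH [k S]].
have [L AL] := @common_bound _ (fun y' k => exists2 i, i < k & y i <> y' i)
  (fun x a b ab '(ex_intro2 i ia ne) => ex_intro2 _ _ i (leq_trans ia ab) ne) l
  (AllP_impl (fun y' '(ex_intro i ne) => ex_intro _ i.+1 (ex_intro2 _ _ i (ltnSn i) ne)) A).
exists (maxn k L); split; last by apply: sepk_mono S; rewrite leq_maxl.
by apply: AllP_impl AL => y' [i ik ne]; exists i => //; apply: leq_trans ik _; rewrite leq_maxr.
Qed.

Lemma sepk_uniq k l : sepk k l -> uniq (map (fun y => mkseq y k) l).
Proof.
elim: l => //= y l IH [A S]; rewrite IH // andbT.
elim: l A {IH S} => //= y' l IH [[i ik ne] A]; rewrite inE negb_or IH // andbT.
apply/eqP => E; apply: ne; have := congr1 (nth false ^~ i) E; by rewrite !nth_mkseq.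
Qed.

Lemma map_sub (X : Type) (Y : eqType) (f : X -> Y) (S : seq Y) l :
  AllP (fun y => f y \in S) l -> {subset map f l <= S}.
Proof.
elim: l => //= y l IH [fy A] x; rewrite inE => /orP [/eqP -> //|]; exact: IH.
Qed.

Lemma paths_bound n T : level_card n T -> forall l, AllP (is_path T) l -> sepl l -> size l <= n.
Proof.
move=> lT l Pl /sepl_sepk [k S].
have S' := sepk_mono (leq_maxl k n) S; set k' := maxn k n in S'.
have cn := lT k' (n_le_pow (leq_maxr k n)).
rewrite -(size_map (fun y => mkseq y k')) -cn cardE -(size_map val).
apply: uniq_leq_size; first exact: sepk_uniq.
apply: map_sub; apply: AllP_impl Pl => y Py.
have sz : size (mkseq y k') == k' by rewrite size_mkseq.
have -> : mkseq y k' = val (Tuple sz) by [].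
apply/mapP; exists (Tuple sz) => //; rewrite mem_enum inE; exact: Py.
Qed.

Lemma max_paths n T : level_card n T ->
  exists l, size l <= n /\ AllP (is_path T) l /\
    forall y, is_path T y -> ExP (fun y' => forall i, y i = y' i) l.
Proof.
move=> lT.
have Q0 : (fun s => exists l, size l = s /\ AllP (is_path T) l /\ sepl l) 0.
  by exists [::].
have QN : forall s, (fun s => exists l, size l = s /\ AllP (is_path T) l /\ sepl l) s -> s <= n.
  move=> s [l [<- [Pl Sl]]]. exact: (@paths_bound n T lT l Pl Sl).
have [s [[l [sl [Pl Sl]]] M]] := bounded_max Q0 QN.
exists l; split; first exact: (@paths_bound n T lT l Pl Sl).
split => // y Py; apply: NNPP => Hn.
have : size (y :: l) <= s.
  apply: M; exists (y :: l); split => //; split => //=; split => //.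
  clear -Hn; elim: l Hn => //= y' l IH Hn; split.
    apply: NNPP => H; apply: Hn; left => i; apply: NNPP => ne; apply: H; by exists i.
  by apply: IH => E; apply: Hn; right.
by rewrite /= sl ltnn.
Qed.

Definition nb (y : nat -> bool) : baire := fun i => y i.
Definition treeOf (r : baire) : seq bool -> bool := fun w => r (wcode w) == 1.
Definition validName n (r : baire) := exists T : seq bool -> bool,
  (forall w, r (wcode w) = T w) /\ is_tree T /\ level_card n T.

Lemma name_treeOf (r : baire) (T : seq bool -> bool) :
  (forall w, r (wcode w) = T w) -> T = treeOf r.
Proof. by move=> E; apply: functional_extensionality => w; rewrite /treeOf E; case: (T w). Qed.

Lemma validName_tree n r : validName n r -> is_tree (treeOf r) /\ level_card n (treeOf r).
Proof. by move=> [T [E [tT lT]]]; rewrite -(name_treeOf E). Qed.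

Lemma konig_valid n r : 0 < n -> validName n r -> exists y, is_path (treeOf r) y.
Proof.
move=> n0 /validName_tree [tT lT].
have [y [Py _]] := konig tT (valid_inf tT lT n0); by exists y.
Qed.

Definition G0 n : baire -> option baire := fun r =>
  match excluded_middle_informative (exists y, is_path (treeOf r) y /\ validName n r) with
  | left h => Some (nb (proj1_sig (constructive_indefinite_description _ h)))
  | right _ => None end.

Definition Gmod n (r' : baire) (y : nat -> bool) : baire -> option baire := fun r =>
  if excluded_middle_informative (r = r') then Some (nb y) else G0 n r.

Lemma G0_some n r s : G0 n r = Some s -> validName n r.
Proof.
rewrite /G0; destruct (excluded_middle_informative _) as [h|h] => // _.
by case: h => y [].
Qed.

Lemma G0_real n : 0 < n -> realizes (C_sharp n) (G0 n).
Proof.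
move=> n0 p x /= E [tx lx].
have vp : validName n p by exists x.
have ex : exists y, is_path (treeOf p) y /\ validName n p.
  have [y Py] := konig_valid n0 vp; by exists y.
rewrite /G0; destruct (excluded_middle_informative _) as [h|h]; last by [].
case: (constructive_indefinite_description _ h) => y [Py _] /=.
exists (nb y); split => //; exists y; split => //.
by rewrite (name_treeOf E).
Qed.

Lemma Gmod_real n r' y : 0 < n -> (validName n r' -> is_path (treeOf r') y) ->
  realizes (C_sharp n) (Gmod n r' y).
Proof.
move=> n0 hy p x E dx; rewrite /Gmod.
destruct (excluded_middle_informative _) as [e|e]; last exact: G0_real.
subst p; exists (nb y); split => //; exists y; split => //=.
rewrite (name_treeOf E); apply: hy; exists x; split => //.
Qed.

Section Main.
Variables (n : nat) (n0 : 0 < n) (K H : baire -> option baire).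
Hypothesis hR : forall G : baire -> option baire, realizes (C_sharp n) G ->
      realizes (C_fin n) (fun p => match H p with
                           | Some r => match G r with
                                       | Some s => K (pairB p s)
                                       | None => None
                                       end
                           | None => None
                           end).

Lemma use_red p' (A' : {set 'I_n.+1}) :
  (forall k : 'I_n.+1, k \notin A' <-> exists i, p' i = k.+1) -> A' != set0 ->
  exists r', H p' = Some r' /\ validName n r' /\ forall y, is_path (treeOf r') y ->
    exists q, K (pairB p' (nb y)) = Some q /\ exists k : 'I_n.+1, q 0 = k /\ k \in A'.
Proof.
move=> nm ne.
have [q [E _]] := hR (G0_real n0) nm ne.
case Hp: (H p') E => [r'|//]; case Gr: (G0 n r') => [s|//] _.
have vr := G0_some Gr.
exists r'; split => //; split => // y Py.
have [q' [E' [k [qk kA]]]] := hR (Gmod_real n0 (fun _ => Py)) nm ne.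
move: E'; rewrite Hp /Gmod; destruct (excluded_middle_informative (r' = r')) as [ee|e]; last by []. move=> E2.
exists q'; split => //; by exists k.
Qed.
End Main.

Lemma prefix_eq (p p' : baire) k : (forall i, i < k -> p i = p' i) -> Defs.prefix p k = Defs.prefix p' k.
Proof.
move=> E; apply: (@eq_from_nth _ 0); first by rewrite !size_mkseq.
by move=> i; rewrite size_mkseq => ik; rewrite !nth_mkseq // E.
Qed.

Lemma mkseqD (f : nat -> bool) a b : mkseq f (a + b) = mkseq f a ++ mkseq (fun i => f (a + i)) b.
Proof.
rewrite /mkseq iotaD map_cat.
have -> : iota (0 + a) b = map (addn a) (iota 0 b) by rewrite add0n -iotaDl addn0.
by rewrite -map_comp.
Qed.

Lemma foldl_bound w x : foldl (fun a (b : bool) => a.*2 + b) x w < x.+1 * 2 ^ size w.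
Proof.
elim: w x => [|b w IH] x /=; first by rewrite expn0 muln1.
apply: leq_trans (IH _) _; rewrite expnS mulnA; apply: leq_mul => //.
case: b => /=; lia.
Qed.

Lemma foldl_pos w x : 0 < x -> 0 < foldl (fun a (b : bool) => a.*2 + b) x w.
Proof. elim: w x => //= b w IH x x0; apply: IH; rewrite -addnn; lia. Qed.

Lemma wcode_bound w D : size w <= D -> wcode w < 2 ^ D.+1.
Proof.
move=> wD; rewrite /wcode.
have := foldl_bound w 1; set x := foldl _ _ _ => h.
have h2 : 2 * 2 ^ size w <= 2 ^ D.+1 by rewrite -expnS leq_pexp2l.
have x0 : 0 < x by apply: foldl_pos.
lia.
Qed.

Lemma AllP_ExP X (P1 P2 : X -> Prop) s : AllP P1 s -> ExP P2 s -> exists z, P1 z /\ P2 z.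
Proof. elim: s => //= x s IH [a A] [e|e]; [by exists x| exact: IH]. Qed.

Lemma ExP_impl X (P1 P2 : X -> Prop) s : (forall x, P1 x -> P2 x) -> ExP P1 s -> ExP P2 s.
Proof. by move=> h; elim: s => //= x s IH [e|e]; [left; auto| right; auto]. Qed.

Section Main2.
Variables (n : nat) (n0 : 0 < n) (K H : baire -> option baire) (cK cH : rcode).
Hypothesis hR : forall G : baire -> option baire, realizes (C_sharp n) G ->
      realizes (C_fin n) (fun p => match H p with
                           | Some r => match G r with
                                       | Some s => K (pairB p s)
                                       | None => None
                                       end
                           | None => None
                           end).
Hypothesis hK : forall p q, K p = Some q -> forall m,
    (exists k, reval cK [:: m; enc (Defs.prefix p k)] (q m).+1) /\
    (forall k y, reval cK [:: m; enc (Defs.prefix p k)] y -> y = 0 \/ y = (q m).+1).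
Hypothesis hH : forall p q, H p = Some q -> forall m,
    (exists k, reval cH [:: m; enc (Defs.prefix p k)] (q m).+1) /\
    (forall k y, reval cH [:: m; enc (Defs.prefix p k)] y -> y = 0 \/ y = (q m).+1).

Definition Inv (u J : seq nat) := forall (p' r' : baire) (y : nat -> bool),
  (forall i, i < size u -> p' i = nth 0 u i) ->
  (exists A' : {set 'I_n.+1}, (forall k : 'I_n.+1, k \notin A' <-> exists i, p' i = k.+1)
      /\ A' != set0) ->
  H p' = Some r' -> is_path (treeOf r') y ->
  exists2 a, a \in J & exists k, reval cK [:: 0; enc (Defs.prefix (pairB p' (nb y)) k)] a.+1.

Lemma inv_step u J j : Inv u J -> j \in J ->
  Inv (rcons u j.+1) [seq a <- J | a != j].
Proof.
move=> I jJ p' r' y hpre [A' [nm ne]] Hp Py.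
have hpre' : forall i, i < size u -> p' i = nth 0 u i.
  move=> i iu; rewrite hpre ?size_rcons 1?ltnW // nth_rcons iu //.
have [a aJ [k ev]] := I p' r' y hpre' (ex_intro _ A' (conj nm ne)) Hp Py.
case: (eqVneq a j) => [eaj|naj]; last by exists a; [rewrite mem_filter naj | exists k].
subst a.
have [r'' [Hp'' [vr hy]]] := use_red n0 hR nm ne.
move: Hp''; rewrite Hp => -[Er]; subst r''.
have [q [Kq [kk [qk kA]]]] := hy y Py.
have [_ h2] := hK Kq 0.
have := h2 _ _ ev; rewrite qk => -[//|[ejk]].
have : kk \notin A'.
  apply/nm; exists (size u); rewrite hpre ?size_rcons // nth_rcons ltnn eqxx.
  by rewrite ejk.
by rewrite kA.
Qed.

Lemma inv_final u : Inv u [::] -> count (fun x => x != 0) u <= n -> False.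
Proof.
move=> I cu.
pose p' : baire := fun i => nth 0 u i.
pose A' := [set k : 'I_n.+1 | k.+1 \notin u].
have nm : forall k : 'I_n.+1, k \notin A' <-> exists i, p' i = k.+1.
  move=> k; rewrite inE negbK; split => [ku|[i e]].
    by exists (index k.+1 u); rewrite /p' nth_index.
  case: (ltnP i (size u)) => h; first by rewrite -e mem_nth.
  by move: e; rewrite /p' nth_default.
have ne : A' != set0.
  apply/set0Pn; apply: NNPP => Hn.
  have all : forall k : 'I_n.+1, k.+1 \in u.
    move=> k; apply: NNPP => Hk; apply: Hn; exists k; rewrite inE; exact/negP.
  have : size (iota 1 n.+1) <= size [seq x <- u | x != 0].
    apply: uniq_leq_size; first exact: iota_uniq.
    move=> x; rewrite mem_iota => /andP [x1 x2]; rewrite mem_filter.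
    have xl : x.-1 < n.+1 by lia.
    have := all (Ordinal xl); rewrite /= prednK // => ->; rewrite andbT; lia.
  rewrite size_iota size_filter; lia.
have [r' [Hp [vr hy]]] := use_red n0 hR nm ne.
have [y Py] := konig_valid n0 vr.
have [a] := I p' r' y (fun i _ => erefl) (ex_intro _ A' (conj nm ne)) Hp Py.
by rewrite in_nil.
Qed.

Lemma inv_ind s u J : size J <= s -> Inv u J ->
  count (fun x => x != 0) u + size J <= n -> False.
Proof.
elim: s u J => [|s IH] u J.
  by case: J => // _ I; rewrite addn0; exact: inv_final.
case: J => [_ I|j J sJ I c]; first by rewrite addn0; exact: inv_final.
have jJ : j \in j :: J by rewrite inE eqxx.
apply: (IH _ _ _ (inv_step I jJ)).
  rewrite size_filter /= eqxx /=; apply: leq_trans (count_size _ _) _; by [].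
rewrite size_filter -cats1 count_cat /= eqxx /= addn0.
have := count_size (fun a => a != j) J; move: c => /=; lia.
Qed.
Lemma inv_init : exists m J, size J <= n /\ Inv (nseq m 0) J.
Proof.
pose p0 : baire := fun _ => 0.
have nm0 : forall k : 'I_n.+1, k \notin [set: 'I_n.+1] <-> exists i, p0 i = k.+1.
  by move=> k; rewrite inE; split => // -[].
have ne0 : [set: 'I_n.+1] != set0 by apply/set0Pn; exists ord0; rewrite inE.
have [r0 [Hp0 [vr0 hy0]]] := use_red n0 hR nm0 ne0.
have [tT lT] := validName_tree vr0.
have [P [sP [PP cov]]] := max_paths lT.
have [J [sJ AJ]] : exists J : seq nat, size J <= size P /\
   AllP (fun z => exists2 a, a \in J &
     exists k, reval cK [:: 0; enc (Defs.prefix (pairB p0 (nb z)) k)] a.+1) P.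
  elim: P {sP cov} PP => [|z P IH] /=; first by exists [::].
  move=> [Pz /IH [J [sJ AJ]]].
  have [q [Kq _]] := hy0 z Pz.
  have [[k ev] _] := hK Kq 0.
  exists (q 0 :: J); split => //=.
  split; first by exists (q 0); [rewrite inE eqxx | exists k].
  by apply: AllP_impl AJ => z' [a aJ ek]; exists a => //; rewrite inE aJ orbT.
pose QE := fun z L => exists2 a, a \in J & exists2 k, k <= L &
     reval cK [:: 0; enc (Defs.prefix (pairB p0 (nb z)) k)] a.+1.
have monoE : forall z l l', l <= l' -> QE z l -> QE z l'.
  move=> z l l' ll [a aJ [k kl ev]]; exists a => //; exists k => //; exact: leq_trans ll.
have [E AE] := @common_bound _ QE monoE P
  (AllP_impl (fun z '(ex_intro2 a aJ (ex_intro k ev)) =>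
     ex_intro _ k (ex_intro2 _ _ a aJ (ex_intro2 _ _ k (leqnn k) ev))) AJ).
pose Qd := fun (t : E.-tuple bool) L => ~ ExP (fun z => mkseq z E = val t) P ->
   forall v, size v = L -> ~~ treeOf r0 (val t ++ v).
have monod : forall t l l', l <= l' -> Qd t l -> Qd t l'.
  move=> t l l' ll h nh v sv; apply/negP => Tv.
  have := h nh (take l v); rewrite size_takel ?sv // => /(_ erefl).
  by rewrite (tree_take _ tT Tv).
have exd : forall t : E.-tuple bool, exists L, Qd t L.
  move=> t; case: (classic (ExP (fun z => mkseq z E = val t) P)) => hE.
         by exists 0. 
       have ninf : ~ inf (treeOf r0) t.
         move=> it; have [z [Pz mz]] := konig tT it; apply: hE.
         apply: ExP_impl (cov z Pz) => z' ez; transitivity (mkseq z E); first by apply: eq_mkseq => i; rewrite ez.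
         by move: mz; rewrite size_tuple.
       have [l hl] := not_all_ex_not _ _ ninf.
       exists l => _ v sv; apply/negP => Tv; apply: hl; by exists v.
have [Ld ALd] := @common_bound _ Qd monod (enum [set: E.-tuple bool])
  (AllP_mem (fun t _ => exd t)).
pose D := E + Ld.
pose QH := fun i m => forall p' r', (forall j, j < m -> p' j = 0) -> H p' = Some r' -> r' i = r0 i.
have monoH : forall i l l', l <= l' -> QH i l -> QH i l'.
  move=> i l l' ll h p' r' hp; apply: h => j jl; apply: hp; exact: leq_trans ll.
have exH : forall i, exists m, QH i m.
  move=> i; have [[k ev] _] := hH Hp0 i.
       exists k => p' r' hp Hr; have [_ h2] := hH Hr i.
       rewrite (@prefix_eq p0 p' k) in ev; last by move=> j jk; rewrite hp.
       by have := h2 _ _ ev => -[//|[->]].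
have [M AM] := @common_bound _ QH monoH (iota 0 (2 ^ D.+1))
  (AllP_mem (fun i _ => exH i)).
exists (maxn M E), J; split; first exact: leq_trans sJ sP.
move=> p' r' y hpre _ Hp Py.
have hz : forall i, i < maxn M E -> p' i = 0.
  by move=> i ii; rewrite hpre ?size_nseq // nth_nseq if_same.
have agree : forall w, size w <= D -> treeOf r' w = treeOf r0 w.
  move=> w sw; rewrite /treeOf.
  have wi : wcode w \in iota 0 (2 ^ D.+1) by rewrite mem_iota add0n wcode_bound.
  rewrite (mem_AllP AM wi p' r' _ Hp) //.
  move=> j jM; apply: hz; apply: leq_trans jM _; exact: leq_maxl.
case: (classic (ExP (fun z => mkseq z E = mkseq y E) P)) => hE.
  have [z [[a aJ [k kE ev]] mz]] := AllP_ExP AE hE.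
  exists a => //; exists k.
  rewrite (@prefix_eq _ (pairB p0 (nb z))) // => i ik.
  have hi : i./2 < E by rewrite ltn_half_double; lia.
  rewrite /pairB; case: (odd i).
    rewrite /nb; have := congr1 (nth false ^~ i./2) mz; rewrite !nth_mkseq // => ->.
    by [].
  by rewrite hz // /p0; apply: leq_trans hi _; exact: leq_maxr.
exfalso.
have st : size (mkseq y E) == E by rewrite size_mkseq.
have tin : Tuple st \in enum [set: E.-tuple bool] by rewrite mem_enum inE.
have := mem_AllP ALd tin hE (mkseq (fun i => y (E + i)) Ld) (size_mkseq _ _).
rewrite /= -mkseqD -agree ?size_mkseq //.
by rewrite Py.
Qed.
End Main2.

Theorem proposition26 (n : nat) : 1 <= n -> ~ weihrauch_le (C_fin n) (C_sharp n).
Proof.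
move=> n0 [K [H [[cK hK] [[cH hH] hR]]]].
have [m [J [sJ I]]] := inv_init n0 hR hK hH.
apply: (inv_ind n0 hR hK (leqnn (size J)) I).
by rewrite count_nseq /= mul0n add0n.
Qed.
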